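(* Let $\alpha\in(0,1)$ satisfy $\frac{1-\alpha}{1+\alpha}<\alpha^{1/2}$, and fix $W_0,H_0>0$, $b_x,b_y\in\mathbb{R}$, $i,j,m,n\in\mathbb{Z}$. For $(i_1,i_2,j_1,j_2,m_1,m_2,n_1,n_2)\in[-\tfrac12,\tfrac12]^8$ define two boxes by $w_k=W_0/\alpha^{i+i_k}$, $h_k=H_0/\alpha^{j+j_k}$, $x_k=b_x\delta_i+(m+m_k)\delta_i$, $y_k=b_y\delta_j+(n+n_k)\delta_j$ ($k=1,2$), with $\delta_i=\frac{W_0}{\alpha^{i}}\frac{1-\alpha}{1+\alpha}$, $\delta_j=\frac{H_0}{\alpha^{j}}\frac{1-\alpha}{1+\alpha}$. Then the minimum of the IoU of the two boxes over $[-\tfrac12,\tfrac12]^8$ is attained at a vertex, i.e. at a point where each of $i_k,j_k,m_k,n_k$ ($k=1,2$) equals $-\tfrac12$ or $\tfrac12$. Consequently, the lower bound on the IoU of any two boxes hashed to the same cell equals the minimum of the IoU over the $2^8$ vertices (and is independent of $W_0,H_0,b_x,b_y,i,j,m,n$). *)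

(* Defs.v *)
From Stdlib Require Import Reals.
Open Scope R_scope.

(* Axis-aligned box given by its centre (x, y), width w and height h. *)
Record box := mkBox { bx : R; by_ : R; bw : R; bh : R }.

Definition overlap1 (c1 l1 c2 l2 : R) : R :=
  Rmax 0 (Rmin (c1 + l1 / 2) (c2 + l2 / 2) - Rmax (c1 - l1 / 2) (c2 - l2 / 2)).

Definition inter_area (B1 B2 : box) : R :=
  overlap1 (bx B1) (bw B1) (bx B2) (bw B2) * overlap1 (by_ B1) (bh B1) (by_ B2) (bh B2).

Definition IoU (B1 B2 : box) : R :=
  inter_area B1 B2 / (bw B1 * bh B1 + bw B2 * bh B2 - inter_area B1 B2).

Record params := mkParams {
  pW0 : R; pH0 : R; pbx : R; pby : R; pi : Z; pj : Z; pm : Z; pn : Z }.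

Definition params_ok (P : params) : Prop := 0 < pW0 P /\ 0 < pH0 P.

Definition delta_i (alpha : R) (P : params) : R :=
  pW0 P / Rpower alpha (IZR (pi P)) * ((1 - alpha) / (1 + alpha)).
Definition delta_j (alpha : R) (P : params) : R :=
  pH0 P / Rpower alpha (IZR (pj P)) * ((1 - alpha) / (1 + alpha)).

(* A point of [-1/2,1/2]^8 is encoded as t : nat -> R, with
   (i1,i2,j1,j2,m1,m2,n1,n2) = (t 0, t 1, ..., t 7); other values are unused. *)
Definition in_cube (t : nat -> R) : Prop :=
  forall k, (k < 8)%nat -> -(1/2) <= t k <= 1/2.
Definition is_vertex (t : nat -> R) : Prop :=
  forall k, (k < 8)%nat -> t k = -(1/2) \/ t k = 1/2.

(* Box number k (k = 0 for box 1, k = 1 for box 2). *)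
Definition box_of (alpha : R) (P : params) (t : nat -> R) (k : nat) : box :=
  mkBox
    (pbx P * delta_i alpha P + (IZR (pm P) + t (4 + k)%nat) * delta_i alpha P)
    (pby P * delta_j alpha P + (IZR (pn P) + t (6 + k)%nat) * delta_j alpha P)
    (pW0 P / Rpower alpha (IZR (pi P) + t k))
    (pH0 P / Rpower alpha (IZR (pj P) + t (2 + k)%nat)).

Definition iou_of (alpha : R) (P : params) (t : nat -> R) : R :=
  IoU (box_of alpha P t 0) (box_of alpha P t 1).

(* Main.v *)
Require Import Defs.
From Stdlib Require Import Reals Lra Lia.
Open Scope R_scope.

Definition ovi (c1 l1 c2 l2 : R) : R :=
  Rmin (c1 + l1 / 2) (c2 + l2 / 2) - Rmax (c1 - l1 / 2) (c2 - l2 / 2).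

Lemma ov_eq c1 l1 c2 l2 : 0 < ovi c1 l1 c2 l2 -> overlap1 c1 l1 c2 l2 = ovi c1 l1 c2 l2.
Proof. intros H; unfold overlap1; fold (ovi c1 l1 c2 l2); apply Rmax_right; lra. Qed.

Lemma ovi_le1 c1 l1 c2 l2 : ovi c1 l1 c2 l2 <= l1.
Proof. unfold ovi. pose proof (Rmin_l (c1 + l1/2) (c2 + l2/2)).
  pose proof (Rmax_l (c1 - l1/2) (c2 - l2/2)). lra. Qed.
Lemma ovi_le2 c1 l1 c2 l2 : ovi c1 l1 c2 l2 <= l2.
Proof. unfold ovi. pose proof (Rmin_r (c1 + l1/2) (c2 + l2/2)).
  pose proof (Rmax_r (c1 - l1/2) (c2 - l2/2)). lra. Qed.

Lemma ovi_concave lam a1 a2 a3 a4 b1 b2 b3 b4 : 0 <= lam <= 1 ->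
  lam * ovi a1 a2 a3 a4 + (1 - lam) * ovi b1 b2 b3 b4 <=
  ovi (lam*a1+(1-lam)*b1) (lam*a2+(1-lam)*b2) (lam*a3+(1-lam)*b3) (lam*a4+(1-lam)*b4).
Proof.
  intros Hl. unfold ovi.
  set (mA := Rmin (a1 + a2/2) (a3 + a4/2)). set (mB := Rmin (b1 + b2/2) (b3 + b4/2)).
  set (MA := Rmax (a1 - a2/2) (a3 - a4/2)). set (MB := Rmax (b1 - b2/2) (b3 - b4/2)).
  assert (h1 : mA <= a1 + a2/2) by apply Rmin_l.
  assert (h2 : mA <= a3 + a4/2) by apply Rmin_r.
  assert (h3 : mB <= b1 + b2/2) by apply Rmin_l.
  assert (h4 : mB <= b3 + b4/2) by apply Rmin_r.
  assert (h5 : a1 - a2/2 <= MA) by apply Rmax_l.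
  assert (h6 : a3 - a4/2 <= MA) by apply Rmax_r.
  assert (h7 : b1 - b2/2 <= MB) by apply Rmax_l.
  assert (h8 : b3 - b4/2 <= MB) by apply Rmax_r.
  assert (lam * mA + (1-lam)*mB <= Rmin (lam*a1+(1-lam)*b1 + (lam*a2+(1-lam)*b2)/2)
            (lam*a3+(1-lam)*b3 + (lam*a4+(1-lam)*b4)/2)).
  { apply Rmin_glb; nra. }
  assert (Rmax (lam*a1+(1-lam)*b1 - (lam*a2+(1-lam)*b2)/2)
            (lam*a3+(1-lam)*b3 - (lam*a4+(1-lam)*b4)/2) <= lam * MA + (1-lam)*MB).
  { apply Rmax_lub; nra. }
  lra.
Qed.

Lemma key lam Gp Gq Gr Lp Lq Lr : 0 <= lam <= 1 -> lam*Gp+(1-lam)*Gr <= Gq ->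
  Lq = lam*Lp+(1-lam)*Lr -> 0 < Gp -> Gp < Lp -> 0 < Gr -> Gr < Lr -> 0 < Gq -> Gq < Lq ->
  Rmin (Gp/(Lp-Gp)) (Gr/(Lr-Gr)) <= Gq/(Lq-Gq).
Proof.
  intros Hl Hc HL H1 H2 H3 H4 H5 H6.
  set (m := Rmin (Gp/(Lp-Gp)) (Gr/(Lr-Gr))).
  assert (mp : m <= Gp/(Lp-Gp)) by apply Rmin_l.
  assert (mr : m <= Gr/(Lr-Gr)) by apply Rmin_r.
  assert (m0 : 0 <= m).
  { unfold m; apply Rmin_glb; apply Rlt_le; apply Rdiv_lt_0_compat; lra. }
  assert (ep : m*(Lp-Gp) <= Gp).
  { replace Gp with (Gp/(Lp-Gp) * (Lp-Gp)) at 2 by (field; lra).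
    apply Rmult_le_compat_r; lra. }
  assert (er : m*(Lr-Gr) <= Gr).
  { replace Gr with (Gr/(Lr-Gr) * (Lr-Gr)) at 2 by (field; lra).
    apply Rmult_le_compat_r; lra. }
  assert (eq : m*(Lq-Gq) <= Gq).
  { subst Lq. assert (0 <= (1+m)*(Gq - (lam*Gp+(1-lam)*Gr))) by nra. nra. }
  replace m with (m*(Lq-Gq)/(Lq-Gq)) by (field; lra).
  unfold Rdiv; apply Rmult_le_compat_r; [apply Rlt_le, Rinv_0_lt_compat; lra | lra].
Qed.

Lemma core_x lam (xp1 wp1 xp2 wp2 xq1 wq1 xq2 wq2 xr1 wr1 xr2 wr2 y1 h1 y2 h2 : R) :
  0 <= lam <= 1 -> xq1 = lam*xp1+(1-lam)*xr1 -> wq1 = lam*wp1+(1-lam)*wr1 ->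
  xq2 = lam*xp2+(1-lam)*xr2 -> wq2 = lam*wp2+(1-lam)*wr2 ->
  wq1*h1+wq2*h2 = lam*(wp1*h1+wp2*h2)+(1-lam)*(wr1*h1+wr2*h2) ->
  0 < ovi xp1 wp1 xp2 wp2 -> 0 < ovi xq1 wq1 xq2 wq2 -> 0 < ovi xr1 wr1 xr2 wr2 ->
  0 < ovi y1 h1 y2 h2 ->
  Rmin (IoU (mkBox xp1 y1 wp1 h1) (mkBox xp2 y2 wp2 h2))
       (IoU (mkBox xr1 y1 wr1 h1) (mkBox xr2 y2 wr2 h2))
  <= IoU (mkBox xq1 y1 wq1 h1) (mkBox xq2 y2 wq2 h2).
Proof.
  intros Hl e1 e2 e3 e4 eU Pp Pq Pr Py.
  unfold IoU, inter_area; simpl.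
  rewrite !ov_eq by assumption.
  pose proof (ovi_le1 xp1 wp1 xp2 wp2). pose proof (ovi_le2 xp1 wp1 xp2 wp2).
  pose proof (ovi_le1 xq1 wq1 xq2 wq2). pose proof (ovi_le2 xq1 wq1 xq2 wq2).
  pose proof (ovi_le1 xr1 wr1 xr2 wr2). pose proof (ovi_le2 xr1 wr1 xr2 wr2).
  pose proof (ovi_le1 y1 h1 y2 h2). pose proof (ovi_le2 y1 h1 y2 h2).
  set (oy := ovi y1 h1 y2 h2) in *.
  set (op := ovi xp1 wp1 xp2 wp2) in *.
  set (oq := ovi xq1 wq1 xq2 wq2) in *.
  set (or := ovi xr1 wr1 xr2 wr2) in *.
  apply (key lam); try nra.
  assert (lam*op + (1-lam)*or <= oq).
  { unfold op, or, oq; rewrite e1, e2, e3, e4; apply ovi_concave; lra. }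
  nra.
Qed.

Lemma iou_swap x1 y1 w1 h1 x2 y2 w2 h2 :
  IoU (mkBox x1 y1 w1 h1) (mkBox x2 y2 w2 h2) = IoU (mkBox y1 x1 h1 w1) (mkBox y2 x2 h2 w2).
Proof. unfold IoU, inter_area; simpl. unfold Rdiv; f_equal; [ring| f_equal; ring]. Qed.

Lemma core_y lam (xp1 wp1 xp2 wp2 xq1 wq1 xq2 wq2 xr1 wr1 xr2 wr2 y1 h1 y2 h2 : R) :
  0 <= lam <= 1 -> xq1 = lam*xp1+(1-lam)*xr1 -> wq1 = lam*wp1+(1-lam)*wr1 ->
  xq2 = lam*xp2+(1-lam)*xr2 -> wq2 = lam*wp2+(1-lam)*wr2 ->
  h1*wq1+h2*wq2 = lam*(h1*wp1+h2*wp2)+(1-lam)*(h1*wr1+h2*wr2) ->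
  0 < ovi xp1 wp1 xp2 wp2 -> 0 < ovi xq1 wq1 xq2 wq2 -> 0 < ovi xr1 wr1 xr2 wr2 ->
  0 < ovi y1 h1 y2 h2 ->
  Rmin (IoU (mkBox y1 xp1 h1 wp1) (mkBox y2 xp2 h2 wp2))
       (IoU (mkBox y1 xr1 h1 wr1) (mkBox y2 xr2 h2 wr2))
  <= IoU (mkBox y1 xq1 h1 wq1) (mkBox y2 xq2 h2 wq2).
Proof.
  intros. rewrite (iou_swap y1 xp1), (iou_swap y1 xr1), (iou_swap y1 xq1).
  apply (core_x lam); auto. lra.
Qed.

Definition cc (alpha : R) := (1 - alpha) / (1 + alpha).
Definition ww (alpha s : R) := / Rpower alpha s.

Lemma ww_exp alpha s : ww alpha s = exp (- (s * ln alpha)).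
Proof. unfold ww, Rpower. rewrite exp_Ropp. reflexivity. Qed.

Lemma ln_neg alpha : 0 < alpha < 1 -> ln alpha < 0.
Proof. intros. rewrite <- ln_1. apply ln_increasing; lra. Qed.

Lemma ww_lt alpha s1 s2 : 0 < alpha < 1 -> s1 < s2 -> ww alpha s1 < ww alpha s2.
Proof. intros Ha H. rewrite !ww_exp. apply exp_increasing.
  pose proof (ln_neg alpha Ha). nra. Qed.

Lemma ww_le alpha s1 s2 : 0 < alpha < 1 -> s1 <= s2 -> ww alpha s1 <= ww alpha s2.
Proof. intros Ha H. destruct (Req_dec s1 s2) as [->|]; [lra|]. apply Rlt_le, ww_lt; lra. Qed.

Lemma ww_half alpha : 0 < alpha < 1 -> ww alpha (-(1/2)) = sqrt alpha.
Proof. intros. unfold ww. rewrite Rpower_Ropp, Rinv_inv.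
  replace (1/2) with (/2) by field. apply Rpower_sqrt; lra. Qed.

Lemma ovi_pos_of a b c d : c < a -> d < a -> c < b -> d < b -> 0 < Rmin a b - Rmax c d.
Proof. intros. unfold Rmin, Rmax; repeat destruct Rle_dec; lra. Qed.

Lemma pos_raw alpha a1 a2 s1 s2 : 0 < alpha < 1 -> cc alpha < sqrt alpha ->
  -(1/2) <= a1 <= 1/2 -> -(1/2) <= a2 <= 1/2 -> -(1/2) <= s1 <= 1/2 -> -(1/2) <= s2 <= 1/2 ->
  0 < ovi (cc alpha * a1) (ww alpha s1) (cc alpha * a2) (ww alpha s2).
Proof.
  intros Ha Hc H1 H2 H3 H4.
  assert (c0 : 0 <= cc alpha).
  { unfold cc. apply Rlt_le, Rdiv_lt_0_compat; lra. }
  pose proof (ww_le alpha (-(1/2)) s1 Ha ltac:(lra)).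
  pose proof (ww_le alpha (-(1/2)) s2 Ha ltac:(lra)).
  rewrite ww_half in * by assumption.
  assert (cc alpha * (a1 - a2) >= - cc alpha) by nra.
  assert (cc alpha * (a2 - a1) >= - cc alpha) by nra.
  unfold ovi; apply ovi_pos_of; lra.
Qed.

Lemma ww_interp alpha s : 0 < alpha < 1 -> -(1/2) <= s <= 1/2 ->
  exists lam, 0 <= lam <= 1 /\ ww alpha s = lam * ww alpha (-(1/2)) + (1-lam) * ww alpha (1/2).
Proof.
  intros Ha Hs.
  pose proof (ww_lt alpha (-(1/2)) (1/2) Ha ltac:(lra)).
  pose proof (ww_le alpha (-(1/2)) s Ha ltac:(lra)).
  pose proof (ww_le alpha s (1/2) Ha ltac:(lra)).
  set (A := ww alpha (-(1/2))) in *. set (B := ww alpha (1/2)) in *. set (W := ww alpha s) in *.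
  exists ((B - W)/(B - A)). split; [split|].
  - unfold Rdiv; apply Rmult_le_pos; [lra| apply Rlt_le, Rinv_0_lt_compat; lra].
  - replace 1 with ((B-A)/(B-A)) by (field; lra).
    unfold Rdiv; apply Rmult_le_compat_r; [apply Rlt_le, Rinv_0_lt_compat|]; lra.
  - field; lra.
Qed.

Definition Jraw alpha a0 a1 a2 a3 a4 a5 a6 a7 :=
  IoU (mkBox (cc alpha * a4) (cc alpha * a6) (ww alpha a0) (ww alpha a2))
      (mkBox (cc alpha * a5) (cc alpha * a7) (ww alpha a1) (ww alpha a3)).

Ltac side lam Hw := first [ assumption | rewrite Hw; ring | ring | (subst lam; ring)
   | (apply pos_raw; auto; lra) ].

Section S.
Context (alpha : R) (Ha : 0 < alpha < 1) (Hc : cc alpha < sqrt alpha)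
  (a0 a1 a2 a3 a4 a5 a6 a7 : R)
  (h0 : -(1/2) <= a0 <= 1/2) (h1 : -(1/2) <= a1 <= 1/2) (h2 : -(1/2) <= a2 <= 1/2)
  (h3 : -(1/2) <= a3 <= 1/2) (h4 : -(1/2) <= a4 <= 1/2) (h5 : -(1/2) <= a5 <= 1/2)
  (h6 : -(1/2) <= a6 <= 1/2) (h7 : -(1/2) <= a7 <= 1/2).

Lemma red0 : Rmin (Jraw alpha (-(1/2)) a1 a2 a3 a4 a5 a6 a7) (Jraw alpha (1/2) a1 a2 a3 a4 a5 a6 a7)
  <= Jraw alpha a0 a1 a2 a3 a4 a5 a6 a7.
Proof. destruct (ww_interp alpha a0 Ha h0) as [lam [Hl Hw]]. unfold Jraw.
  apply (core_x lam); side lam Hw. Qed.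
Lemma red1 : Rmin (Jraw alpha a0 (-(1/2)) a2 a3 a4 a5 a6 a7) (Jraw alpha a0 (1/2) a2 a3 a4 a5 a6 a7)
  <= Jraw alpha a0 a1 a2 a3 a4 a5 a6 a7.
Proof. destruct (ww_interp alpha a1 Ha h1) as [lam [Hl Hw]]. unfold Jraw.
  apply (core_x lam); side lam Hw. Qed.
Lemma red2 : Rmin (Jraw alpha a0 a1 (-(1/2)) a3 a4 a5 a6 a7) (Jraw alpha a0 a1 (1/2) a3 a4 a5 a6 a7)
  <= Jraw alpha a0 a1 a2 a3 a4 a5 a6 a7.
Proof. destruct (ww_interp alpha a2 Ha h2) as [lam [Hl Hw]]. unfold Jraw.
  apply (core_y lam); side lam Hw. Qed.
Lemma red3 : Rmin (Jraw alpha a0 a1 a2 (-(1/2)) a4 a5 a6 a7) (Jraw alpha a0 a1 a2 (1/2) a4 a5 a6 a7)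
  <= Jraw alpha a0 a1 a2 a3 a4 a5 a6 a7.
Proof. destruct (ww_interp alpha a3 Ha h3) as [lam [Hl Hw]]. unfold Jraw.
  apply (core_y lam); side lam Hw. Qed.
Lemma red4 : Rmin (Jraw alpha a0 a1 a2 a3 (-(1/2)) a5 a6 a7) (Jraw alpha a0 a1 a2 a3 (1/2) a5 a6 a7)
  <= Jraw alpha a0 a1 a2 a3 a4 a5 a6 a7.
Proof. unfold Jraw. apply (core_x (1/2 - a4)); first [lra | ring | (apply pos_raw; auto; lra)]. Qed.
Lemma red5 : Rmin (Jraw alpha a0 a1 a2 a3 a4 (-(1/2)) a6 a7) (Jraw alpha a0 a1 a2 a3 a4 (1/2) a6 a7)
  <= Jraw alpha a0 a1 a2 a3 a4 a5 a6 a7.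
Proof. unfold Jraw. apply (core_x (1/2 - a5)); first [lra | ring | (apply pos_raw; auto; lra)]. Qed.
Lemma red6 : Rmin (Jraw alpha a0 a1 a2 a3 a4 a5 (-(1/2)) a7) (Jraw alpha a0 a1 a2 a3 a4 a5 (1/2) a7)
  <= Jraw alpha a0 a1 a2 a3 a4 a5 a6 a7.
Proof. unfold Jraw. apply (core_y (1/2 - a6)); first [lra | ring | (apply pos_raw; auto; lra)]. Qed.
Lemma red7 : Rmin (Jraw alpha a0 a1 a2 a3 a4 a5 a6 (-(1/2))) (Jraw alpha a0 a1 a2 a3 a4 a5 a6 (1/2))
  <= Jraw alpha a0 a1 a2 a3 a4 a5 a6 a7.
Proof. unfold Jraw. apply (core_y (1/2 - a7)); first [lra | ring | (apply pos_raw; auto; lra)]. Qed.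
End S.

Definition J alpha (t : nat -> R) :=
  Jraw alpha (t 0%nat) (t 1%nat) (t 2%nat) (t 3%nat) (t 4%nat) (t 5%nat) (t 6%nat) (t 7%nat).

Definition upd (t : nat -> R) (k : nat) (v : R) : nat -> R :=
  fun n => if Nat.eqb n k then v else t n.

Lemma upd_eq t k v : upd t k v k = v.
Proof. unfold upd; rewrite Nat.eqb_refl; auto. Qed.
Lemma upd_neq t k v n : n <> k -> upd t k v n = t n.
Proof. intros; unfold upd; apply Nat.eqb_neq in H; rewrite H; auto. Qed.

Lemma red_k alpha t k : 0 < alpha < 1 -> cc alpha < sqrt alpha -> in_cube t -> (k < 8)%nat ->
  Rmin (J alpha (upd t k (-(1/2)))) (J alpha (upd t k (1/2))) <= J alpha t.
Proof.
  intros Ha Hc Ht Hk.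
  pose proof (Ht 0%nat ltac:(lia)). pose proof (Ht 1%nat ltac:(lia)).
  pose proof (Ht 2%nat ltac:(lia)). pose proof (Ht 3%nat ltac:(lia)).
  pose proof (Ht 4%nat ltac:(lia)). pose proof (Ht 5%nat ltac:(lia)).
  pose proof (Ht 6%nat ltac:(lia)). pose proof (Ht 7%nat ltac:(lia)).
  unfold J, upd.
  do 8 (destruct k as [|k]; [cbn [Nat.eqb];
     first [ apply red0 | apply red1 | apply red2 | apply red3 | apply red4 | apply red5
           | apply red6 | apply red7 ]; assumption|]).
  lia.
Qed.

Lemma upd_cube t k v : in_cube t -> -(1/2) <= v <= 1/2 -> in_cube (upd t k v).
Proof. intros Ht Hv n Hn. destruct (Nat.eq_dec n k) as [->|].
  - rewrite upd_eq; auto. - rewrite upd_neq; auto. Qed.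

Lemma reduce alpha (Ha : 0 < alpha < 1) (Hc : cc alpha < sqrt alpha) n : (n <= 8)%nat ->
  forall t, in_cube t -> exists t', in_cube t' /\
    (forall k, (k < n)%nat -> t' k = -(1/2) \/ t' k = 1/2) /\ J alpha t' <= J alpha t.
Proof.
  induction n as [|n IH]; intros Hn t Ht.
  - exists t; split; [auto| split; [intros; lia| lra]].
  - destruct (IH ltac:(lia) t Ht) as [t' [Ht' [Hv Hle]]].
    pose proof (red_k alpha t' n Ha Hc Ht' ltac:(lia)) as Hr.
    destruct (Rle_dec (J alpha (upd t' n (-(1/2)))) (J alpha (upd t' n (1/2)))) as [r|r].
    + rewrite Rmin_left in Hr by lra.
      exists (upd t' n (-(1/2))); split; [apply upd_cube; auto; lra|split; [|lra]].
      intros k Hk. destruct (Nat.eq_dec k n) as [->|]; [rewrite upd_eq; auto|].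
      rewrite upd_neq by auto. apply Hv; lia.
    + rewrite Rmin_right in Hr by lra.
      exists (upd t' n (1/2)); split; [apply upd_cube; auto; lra|split; [|lra]].
      intros k Hk. destruct (Nat.eq_dec k n) as [->|]; [rewrite upd_eq; auto|].
      rewrite upd_neq by auto. apply Hv; lia.
Qed.

Lemma J_ext alpha u t : (forall k, (k < 8)%nat -> u k = t k) -> J alpha u = J alpha t.
Proof. intros H. unfold J.
  rewrite (H 0%nat), (H 1%nat), (H 2%nat), (H 3%nat), (H 4%nat), (H 5%nat), (H 6%nat), (H 7%nat)
   by lia. reflexivity. Qed.

Lemma Qn alpha n : (n <= 8)%nat -> forall t, exists v,
  (forall k, (n <= k < 8)%nat -> v k = t k) /\
  (forall k, (k < n)%nat -> v k = -(1/2) \/ v k = 1/2) /\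
  (forall u, (forall k, (n <= k < 8)%nat -> u k = t k) ->
     (forall k, (k < n)%nat -> u k = -(1/2) \/ u k = 1/2) -> J alpha v <= J alpha u).
Proof.
  induction n as [|n IH]; intros Hn t.
  - exists t; split; [auto|split; [intros; lia|]].
    intros u Hu _. rewrite (J_ext alpha u t); [lra|]. intros; apply Hu; lia.
  - destruct (IH ltac:(lia) (upd t n (-(1/2)))) as [v1 [A1 [B1 C1]]].
    destruct (IH ltac:(lia) (upd t n (1/2))) as [v2 [A2 [B2 C2]]].
    assert (G : forall u, (forall k, (S n <= k < 8)%nat -> u k = t k) ->
       (forall k, (k < S n)%nat -> u k = -(1/2) \/ u k = 1/2) ->
       J alpha v1 <= J alpha u \/ J alpha v2 <= J alpha u).
    { intros u Hu Hv. destruct (Hv n ltac:(lia)) as [e|e]; [left; apply C1|right; apply C2];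
      try (intros; apply Hv; lia);
      intros k Hk; (destruct (Nat.eq_dec k n) as [->|]; [rewrite upd_eq; auto|
        rewrite upd_neq by auto; apply Hu; lia]). }
    destruct (Rle_dec (J alpha v1) (J alpha v2)) as [r|r].
    + exists v1; split; [|split].
      * intros k Hk. rewrite A1 by lia. apply upd_neq; lia.
      * intros k Hk. destruct (Nat.eq_dec k n) as [->|].
        -- rewrite A1 by lia. rewrite upd_eq. auto.
        -- apply B1; lia.
      * intros u Hu Hv. destruct (G u Hu Hv); lra.
    + exists v2; split; [|split].
      * intros k Hk. rewrite A2 by lia. apply upd_neq; lia.
      * intros k Hk. destruct (Nat.eq_dec k n) as [->|].
        -- rewrite A2 by lia. rewrite upd_eq. auto.
        -- apply B2; lia.
      * intros u Hu Hv. destruct (G u Hu Hv); lra.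
Qed.

Lemma ov_scale s o c1 l1 c2 l2 : 0 < s ->
  overlap1 (s*c1+o) (s*l1) (s*c2+o) (s*l2) = s * overlap1 c1 l1 c2 l2.
Proof. intros Hs. unfold overlap1, Rmin, Rmax. repeat destruct Rle_dec; nra. Qed.

Lemma iou_scale sx sy ox oy x1 y1 w1 h1 x2 y2 w2 h2 : 0 < sx -> 0 < sy ->
  IoU (mkBox (sx*x1+ox) (sy*y1+oy) (sx*w1) (sy*h1)) (mkBox (sx*x2+ox) (sy*y2+oy) (sx*w2) (sy*h2))
  = IoU (mkBox x1 y1 w1 h1) (mkBox x2 y2 w2 h2).
Proof.
  intros Hx Hy. unfold IoU, inter_area; simpl. rewrite !ov_scale by auto.
  set (A := overlap1 x1 w1 x2 w2). set (B := overlap1 y1 h1 y2 h2).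
  unfold Rdiv.
  replace (sx*w1*(sy*h1)+sx*w2*(sy*h2)-sx*A*(sy*B)) with ((sx*sy)*(w1*h1+w2*h2-A*B)) by ring.
  rewrite !Rinv_mult.
  assert (sx * / sx = 1) by (apply Rinv_r; lra).
  assert (sy * / sy = 1) by (apply Rinv_r; lra).
  transitivity ((sx * /sx) * (sy * / sy) * (A*B*/(w1*h1+w2*h2-A*B))); [ring|].
  rewrite H, H0; ring.
Qed.

Lemma box_of_eq alpha P t k : 0 < alpha ->
  box_of alpha P t k =
  mkBox (pW0 P / Rpower alpha (IZR (pi P)) * (cc alpha * t (4+k)%nat)
          + (pbx P + IZR (pm P)) * delta_i alpha P)
        (pH0 P / Rpower alpha (IZR (pj P)) * (cc alpha * t (6+k)%nat)
          + (pby P + IZR (pn P)) * delta_j alpha P)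
        (pW0 P / Rpower alpha (IZR (pi P)) * ww alpha (t k))
        (pH0 P / Rpower alpha (IZR (pj P)) * ww alpha (t (2+k)%nat)).
Proof.
  intros Ha. unfold box_of, delta_i, delta_j, ww, cc.
  assert (forall y, 0 < Rpower alpha y) by (intros; unfold Rpower; apply exp_pos).
  rewrite !Rpower_plus.
  f_equal; try ring; field; try split; apply Rgt_not_eq; auto.
  all: apply H.
Qed.

Lemma iou_J alpha P t : 0 < alpha -> params_ok P -> iou_of alpha P t = J alpha t.
Proof.
  intros Ha [HW HH]. unfold iou_of. rewrite !box_of_eq by auto.
  assert (forall y, 0 < Rpower alpha y) by (intros; unfold Rpower; apply exp_pos).
  apply iou_scale; apply Rdiv_lt_0_compat; auto.
Qed.

Theorem theorem2 (alpha : R) (Ha : 0 < alpha < 1)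
  (Hcond : (1 - alpha) / (1 + alpha) < sqrt alpha)
  (P : params) (HP : params_ok P) :
  exists v, is_vertex v /\
    (forall t, in_cube t -> iou_of alpha P v <= iou_of alpha P t) /\
    (forall (P' : params) (v' : nat -> R), params_ok P' -> is_vertex v' ->
       (forall u, is_vertex u -> iou_of alpha P' v' <= iou_of alpha P' u) ->
       iou_of alpha P' v' = iou_of alpha P v).
Proof.
  assert (Hc : cc alpha < sqrt alpha) by exact Hcond.
  destruct (Qn alpha 8 ltac:(lia) (fun _ => 0)) as [v [_ [Hv Hmin]]].
  assert (Hmin' : forall u, is_vertex u -> J alpha v <= J alpha u).
  { intros u Hu. apply Hmin; [intros; lia| exact Hu]. }
  exists v; split; [exact Hv|split].
  - intros t Ht. rewrite !iou_J by (auto; lra).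
    destruct (reduce alpha Ha Hc 8 ltac:(lia) t Ht) as [t' [_ [Ht' Hle]]].
    pose proof (Hmin' t' Ht'). lra.
  - intros P' v' HP' Hv' Hm. pose proof (Hm v Hv) as Hq.
    rewrite !iou_J in Hq by (auto; lra). rewrite !iou_J by (auto; lra). pose proof (Hmin' v' Hv'). lra.
Qed.
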